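(* Let $c>0$ and let $\nu,\tilde\nu$ be probability measures on $\mathbb R_+$ different from $\boldsymbol d_0$. Suppose that for $i=1,2$ the triple $(\boldsymbol{\tilde\delta}_i,\boldsymbol\delta_i,\boldsymbol x_i)$ satisfies: $\boldsymbol{\tilde\delta}_i\in\widetilde{\mathcal D}$, $\boldsymbol x_i\in\mathbb R\setminus\{0\}$, $\boldsymbol\delta_i=c\int\frac{t}{-\boldsymbol x_i(1+\boldsymbol{\tilde\delta}_i t)}\nu(dt)\in\mathcal D$, $\boldsymbol{\tilde\delta}_i=\int\frac{t}{-\boldsymbol x_i(1+\boldsymbol\delta_i t)}\tilde\nu(dt)$, and $$1-\boldsymbol x_i^2\Bigl(c\int\frac{t^2}{\boldsymbol x_i^2(1+\boldsymbol{\tilde\delta}_i t)^2}\nu(dt)\Bigr)\Bigl(\int\frac{t^2}{\boldsymbol x_i^2(1+\boldsymbol\delta_i t)^2}\tilde\nu(dt)\Bigr)>0.$$ Then $\boldsymbol{\tilde\delta}_1\neq\boldsymbol{\tilde\delta}_2\Rightarrow\boldsymbol x_1\neq\boldsymbol x_2$, and $\boldsymbol\delta_1\neq\boldsymbol\delta_2\Rightarrow\boldsymbol x_1\neq\boldsymbol x_2$.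
   Context: $\boldsymbol d_0$ is the Dirac mass at $0$. Define $\mathcal D=\{0\}\cup\{\boldsymbol\delta\in\mathbb R\setminus\{0\}:-\boldsymbol\delta^{-1}\notin\operatorname{supp}(\tilde\nu)\}$ if $\operatorname{supp}(\tilde\nu)$ is compact and $\mathcal D=\{\boldsymbol\delta\in\mathbb R\setminus\{0\}:-\boldsymbol\delta^{-1}\notin\operatorname{supp}(\tilde\nu)\}$ otherwise; $\widetilde{\mathcal D}$ is defined in the same way with $\nu$ in place of $\tilde\nu$. *)

(* Defs.v *)
From HB Require Import structures.
From mathcomp Require Import all_boot all_order all_algebra.
From mathcomp Require Import all_classical all_reals all_analysis.
Set Implicit Arguments. Unset Strict Implicit. Unset Printing Implicit Defensive.
Import Order.TTheory GRing.Theory Num.Theory.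
Import numFieldNormedType.Exports.
Local Open Scope classical_set_scope.
Local Open Scope ring_scope.

Definition msupp (R : realType) (mu : {measure set R -> \bar R}) : set R :=
  [set x | forall e : R, 0 < e -> (0 < mu (ball x e))%E].

(* The set D attached to a measure mu (paper's D with mu = tilde nu,
   paper's tilde D with mu = nu). *)
Definition Dset (R : realType) (mu : {measure set R -> \bar R}) : set R :=
  [set d | (d = 0 /\ compact (msupp mu)) \/ (d != 0 /\ ~ msupp mu (- d^-1))].

Definition prob_on_Rplus (R : realType) (mu : probability R R) : Prop :=
  mu [set x : R | x < 0] = 0%E.

Definition is_dirac0 (R : realType) (mu : probability R R) : Prop :=
  forall A : set R, measurable A -> mu A = \d_(0 : R) A.

Definition triple_ok (R : realType) (c : R) (nu nut : probability R R)
  (dt d x : R) : Prop :=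
  Dset nu dt /\ x != 0 /\
  d = c * Rintegral nu setT (fun t => t / (- x * (1 + dt * t))) /\
  Dset nut d /\
  dt = Rintegral nut setT (fun t => t / (- x * (1 + d * t))) /\
  0 < 1 - x ^+ 2
        * (c * Rintegral nu setT (fun t => t ^+ 2 / (x ^+ 2 * (1 + dt * t) ^+ 2)))
        * Rintegral nut setT (fun t => t ^+ 2 / (x ^+ 2 * (1 + d * t) ^+ 2)).

(* Main.v *)
Require Import Defs.
From HB Require Import structures.
From mathcomp Require Import all_boot all_order all_algebra.
From mathcomp Require Import all_classical all_reals all_analysis.
From mathcomp Require Import ring lra measurable_realfun.
Set Implicit Arguments. Unset Strict Implicit. Unset Printing Implicit Defensive.
Import Order.TTheory GRing.Theory Num.Theory.
Import numFieldNormedType.Exports.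
Local Open Scope classical_set_scope.
Local Open Scope ring_scope.

Section H.
Variable R : realType.

Lemma measurable_inv : measurable_fun [set: R] (@GRing.inv R).
Proof.
have -> : [set: R] = [set 0] `|` ~` [set 0].
  by rewrite setUv.
apply/measurable_funU => //.
  exact: measurableC.
split.
  have h : {in [set (0:R)], (fun=> (0:R)) =1 GRing.inv}.
    by move=> x; rewrite inE /= => ->; rewrite invr0.
  exact: (eq_measurable_fun _ h (measurable_cst _)).
apply: open_continuous_measurable_fun.
  exact/closed_openC/accessible_closed_set1/hausdorff_accessible/Rhausdorff.
move=> x; rewrite inE /= => /eqP x0; exact: inv_continuous.
Qed.

Definition BM (mu : probability R R) (G : set R) (h : R -> R) :=
  measurable_fun [set: R] h /\ exists K, forall t, G t -> `|h t| <= K.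

Variables (mu : probability R R) (G : set R).

Lemma BM_cst k : BM mu G (fun=> k).
Proof. by split; [exact: measurable_cst| exists `|k|]. Qed.

Lemma BM_add f g : BM mu G f -> BM mu G g -> BM mu G (fun t => f t + g t).
Proof.
move=> [mf [K1 h1]] [mg [K2 h2]]; split; first exact: measurable_funD.
exists (K1 + K2) => t Gt; apply: (le_trans (ler_normD _ _)).
by apply: lerD; [exact: h1|exact: h2].
Qed.

Lemma BM_opp f : BM mu G f -> BM mu G (fun t => - f t).
Proof.
move=> [mf [K1 h1]]; split; first exact: measurable_funN.
by exists K1 => t Gt; rewrite normrN; exact: h1.
Qed.

Lemma BM_mul f g : BM mu G f -> BM mu G g -> BM mu G (fun t => f t * g t).
Proof.
move=> [mf [K1 h1]] [mg [K2 h2]]; split; first exact: measurable_funM.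
exists (K1 * K2) => t Gt; rewrite normrM.
by apply: ler_pM => //; [exact: h1|exact: h2].
Qed.

Lemma BM_integrable f : measurable G -> BM mu G f -> mu.-integrable G (EFin \o f).
Proof.
move=> mG [mf [K hK]]; apply: measurable_bounded_integrable => //.
- apply: (@le_lt_trans _ _ (mu setT)); first by apply: le_measure; rewrite ?inE.
  by rewrite probability_setT ltry.
- exact: measurable_funS mf.
- rewrite /bounded_near; near=> M => t Gt /=.
  apply: le_trans (hK t Gt) _; near: M; exact: nbhs_pinfty_ge (num_real _).
Unshelve. all: end_near. Qed.


End H.

Section S.
Variable R : realType.
Variable mu : probability R R.

Lemma not_supp_ball (y : R) : ~ msupp mu y ->
  exists e, 0 < e /\ mu (ball y e) = 0%E.
Proof.
move=> /existsNP [e /not_implyP [e0 he]]; exists e; split => //.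
apply/le_anti/andP; split; last exact: measure_ge0.
by rewrite leNgt; apply/negP.
Qed.

Lemma good_nonzero a : a != 0 -> ~ msupp mu (- a^-1) ->
  exists K, 0 <= K /\ mu.-negligible [set t | ~ (`|t| <= K * `|1 + a * t|)].
Proof.
move=> a0 /not_supp_ball [e [e0 he]].
set p := - a^-1.
have ap : 0 < `|a| by rewrite normr_gt0.
exists ((1 + `|p| / e) / `|a|); split.
  by apply: divr_ge0 => //; apply: addr_ge0 => //; apply: divr_ge0 => //; exact: ltW.
exists (ball p e); split; [apply: open_measurable; exact: ball_open|exact: he|].
move=> t /= ht; rewrite -ball_normE /=; apply/negPn/negP; rewrite -leNgt => ept.
apply: ht.
have -> : 1 + a * t = a * (t - p).
  by rewrite /p mulrBr mulrN opprK mulfV // addrC.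
rewrite normrM mulrA divfK; last by rewrite normr_eq0.
have h1 : `|t| <= `|t - p| + `|p|.
  by rewrite -{1}(subrK p t); exact: ler_normD.
have h2 : `|p| <= `|p| / e * `|t - p|.
  rewrite -{1}(mulr1 `|p|) -mulrA ler_wpM2l //.
  by rewrite mulrC ler_pdivlMr // mul1r distrC.
apply: (le_trans h1); rewrite mulrDl mul1r; exact: lerD.
Qed.


Lemma good_zero : prob_on_Rplus mu -> compact (msupp mu) ->
  exists K, 0 <= K /\ mu.-negligible [set t | ~ (`|t| <= K * `|1 + 0 * t|)].
Proof.
move=> Hplus cpt.
have [M [Mr HM]] := compact_bounded cpt.
pose K : R := `|M| + 2.
have hK : forall y, K <= y -> ~ msupp mu y.
  move=> y Ky Sy.
  have Mlt : M < `|M| + 1 by apply: (le_lt_trans (ler_norm M)); rewrite ltrDl.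
  have yM : `|y| <= `|M| + 1 := HM _ Mlt y Sy.
  have : `|M| + 2 <= `|M| + 1 by apply: (le_trans Ky); apply: le_trans yM; exact: ler_norm.
  move=> h; lra.
have K0 : 0 <= K by rewrite /K addr_ge0.
have seg0 : forall n : nat, mu [set` `[K, K + n%:R]] = 0%E.
  move=> n; apply/le_anti/andP; split; last exact: measure_ge0.
  have cc := @segment_compact R K (K + n%:R); rewrite compact_cover in cc.
  have [|D' D'sub cov] := cc (R * R)%type [set q | 0 < q.2 /\ mu (ball q.1 q.2) = 0%E]
     (fun q => ball q.1 q.2) (fun q _ => ball_open _ _).
    move=> y; rewrite /= in_itv /= => /andP[Ky _].
    have [e [e0 he]] := not_supp_ball (hK y Ky).
    by exists (y, e) => //; exact: ballxx.
  apply: le_trans (content_sub_fsum mu (finite_fset D') _ _ cov) _.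
  - by move=> i _; apply: open_measurable; exact: ball_open.
  - by apply: compact_measurable; exact: segment_compact.
  by rewrite fsbig1 // => q /= /D'sub; rewrite inE => -[].
exists K; split => //.
have sub : [set t | ~ (`|t| <= K * `|1 + 0 * t|)] `<=`
    [set t | t < 0] `|` \bigcup_n [set` `[K, K + n%:R]].
  move=> t /=; rewrite mul0r addr0 normr1 mulr1 => /negP; rewrite -ltNge => Kt.
  have [t0|t0] := ltP t 0; first by left.
  right; exists (Num.truncn (t - K)).+1 => //=.
  rewrite in_itv /=; apply/andP; split.
    by move: Kt; rewrite ger0_norm // => /ltW.
  by rewrite -lerBlDl ltW // truncnS_gt.
apply: (negligibleS sub); apply: negligibleU.
  apply/negligibleP; last exact: Hplus.
  by apply: open_measurable; exact: open_lt.
apply: negligible_bigcup => n; apply/negligibleP; last exact: seg0.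
by apply: compact_measurable; exact: segment_compact.
Qed.



Lemma good2 a1 a2 : prob_on_Rplus mu -> Dset mu a1 -> Dset mu a2 ->
  exists N K1 K2, [/\ measurable N, mu N = 0%E, 0 <= K1, 0 <= K2 &
    forall t, ~ N t -> `|t| <= K1 * `|1 + a1 * t| /\ `|t| <= K2 * `|1 + a2 * t|].
Proof.
move=> Hp.
have gs : forall a, Dset mu a -> exists K, 0 <= K /\
    mu.-negligible [set t | ~ (`|t| <= K * `|1 + a * t|)].
  move=> a [[-> cpt]|[a0 ns]]; first exact: good_zero.
  exact: good_nonzero.
move=> /gs [K1 [K10 n1]] /gs [K2 [K20 n2]].
have [N [mN N0 sub]] := negligibleU n1 n2.
exists N, K1, K2; split => // t Nt; split.
  by apply: contrapT => h; apply: Nt; apply: sub; left.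
by apply: contrapT => h; apply: Nt; apply: sub; right.
Qed.

Lemma to_G N h : measurable N -> mu N = 0%E -> BM mu (~` N) h ->
  Rintegral mu setT h = Rintegral mu (~` N) h.
Proof.
move=> mN N0 bh.
have ih : mu.-integrable (~` N) (EFin \o h).
  by apply: BM_integrable => //; exact: measurableC.
have mh : measurable_fun [set: R] (EFin \o h).
  by apply/measurable_EFinP; case: bh.
rewrite /Rintegral (negligible_integral mN measurableT _ N0) ?setTD //.
by apply/(negligible_integrable mN measurableT mh N0); rewrite setTD.
Qed.

Lemma CS (G : set R) f g : measurable G -> BM mu G f -> BM mu G g ->
  (Rintegral mu G (fun t => f t * g t)) ^+ 2 <=
  Rintegral mu G (fun t => f t * f t) * Rintegral mu G (fun t => g t * g t).
Proof.
move=> mG bf bg.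
set P := Rintegral mu G (fun t => f t * g t).
set U := Rintegral mu G (fun t => f t * f t).
set V := Rintegral mu G (fun t => g t * g t).
have iff := BM_integrable mG (BM_mul bf bf).
have ifg := BM_integrable mG (BM_mul bf bg).
have igg := BM_integrable mG (BM_mul bg bg).
have Q : forall a b, 0 <= a * a * U - 2 * a * b * P + b * b * V.
  move=> a b.
  have -> : a * a * U - 2 * a * b * P + b * b * V =
    Rintegral mu G (fun t => (a * f t - b * g t) * (a * f t - b * g t)).
    rewrite [RHS](@eq_Rintegral _ _ _ mu G (fun t => (a * a) * (f t * f t) +
                 ((- (2 * a * b)) * (f t * g t) + (b * b) * (g t * g t)))); last first.
      by move=> t _; ring.
    rewrite RintegralD //; last first.
      apply: BM_integrable => //; apply: BM_add; apply: BM_mul => //;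
        by [exact: BM_cst|exact: BM_mul].
      by apply: BM_integrable => //; apply: BM_mul => //; [exact: BM_cst|exact: BM_mul].
    rewrite RintegralD //; last first.
      by apply: BM_integrable => //; apply: BM_mul => //; [exact: BM_cst|exact: BM_mul].
      by apply: BM_integrable => //; apply: BM_mul => //; [exact: BM_cst|exact: BM_mul].
    rewrite !RintegralZl //.
    rewrite /U /P /V; ring.
  by apply: Rintegral_ge0 => t _; rewrite -expr2 sqr_ge0.
have U0 : 0 <= U by apply: Rintegral_ge0 => t _; rewrite -expr2 sqr_ge0.
have V0 : 0 <= V by apply: Rintegral_ge0 => t _; rewrite -expr2 sqr_ge0.
have [U00|U0'] := eqVneq U 0.
  have h := Q (V + 1) P.
  have h2 : 0 <= - (P * P) * (V + 2) by move: h; rewrite U00; nra.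
  have h3 : P * P <= 0 by nra.
  rewrite U00; nra.
have Up : 0 < U by rewrite lt_neqAle eq_sym U0' U0.
have h := Q P U.
have h2 : 0 <= U * (U * V - P * P) by nra.
have h3 : P * P <= U * V.
  by rewrite -subr_ge0; rewrite pmulr_rge0 in h2.
by rewrite expr2.
Qed.


Lemma intZ N k h : measurable N -> mu N = 0%E -> BM mu (~` N) h ->
  Rintegral mu setT (fun t => k * h t) = k * Rintegral mu (~` N) h.
Proof.
move=> mN N0 bh; rewrite (to_G mN N0); last by apply: BM_mul => //; exact: BM_cst.
by rewrite RintegralZl //; [exact: measurableC|apply: BM_integrable => //; exact: measurableC].
Qed.

Lemma BM_f (G : set R) a K : 0 <= K -> (forall t, G t -> `|t| <= K * `|1 + a * t|) ->
  BM mu G (fun t => t / (1 + a * t)).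
Proof.
move=> K0 hK; split.
  apply: measurable_funM => //; apply: measurableT_comp; first exact: measurable_inv.
  by apply: measurable_funD => //; apply: measurable_funM.
exists K => t Gt; have h := hK t Gt.
have [->|t0] := eqVneq t 0; first by rewrite mul0r normr0.
have F0 : 0 < `|1 + a * t|.
  rewrite normr_gt0; apply/eqP => F0; move: h; rewrite F0 normr0 mulr0.
  by rewrite normr_le0 (negPf t0).
by rewrite normrM normfV ler_pdivrMr.
Qed.

Lemma side a1 a2 x k : prob_on_Rplus mu -> Dset mu a1 -> Dset mu a2 -> x != 0 ->
  exists P U1 U2, [/\
    k * Rintegral mu setT (fun t => t / (- x * (1 + a1 * t))) -
    k * Rintegral mu setT (fun t => t / (- x * (1 + a2 * t))) = k / x * (a1 - a2) * P,
    Rintegral mu setT (fun t => t ^+ 2 / (x ^+ 2 * (1 + a1 * t) ^+ 2)) = U1 / x ^+ 2,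
    Rintegral mu setT (fun t => t ^+ 2 / (x ^+ 2 * (1 + a2 * t) ^+ 2)) = U2 / x ^+ 2,
    0 <= U1 & 0 <= U2] /\ P ^+ 2 <= U1 * U2.
Proof.
move=> Hp D1 D2 x0.
have [N [K1 [K2 [mN N0 K10 K20 hb]]]] := good2 Hp D1 D2.
have mG : measurable (~` N) by exact: measurableC.
have bf1 := @BM_f (~` N) a1 K1 K10 (fun t Nt => (hb t Nt).1).
have bf2 := @BM_f (~` N) a2 K2 K20 (fun t Nt => (hb t Nt).2).
set f1 := (fun t => t / (1 + a1 * t)) in bf1.
set f2 := (fun t => t / (1 + a2 * t)) in bf2.
have eI : forall a, Rintegral mu setT (fun t => t / (- x * (1 + a * t))) =
    Rintegral mu setT (fun t => - x^-1 * (t / (1 + a * t))).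
  move=> a; apply: eq_Rintegral => t _.
  by rewrite invfM invrN; ring.
have eU : forall a, Rintegral mu setT (fun t => t ^+ 2 / (x ^+ 2 * (1 + a * t) ^+ 2)) =
    Rintegral mu setT (fun t => (x ^+ 2)^-1 * ((t / (1 + a * t)) * (t / (1 + a * t)))).
  move=> a; apply: eq_Rintegral => t _.
  by rewrite !expr2 !invfM; ring.
have dif : Rintegral mu (~` N) f1 = Rintegral mu (~` N) f2 +
    (a2 - a1) * Rintegral mu (~` N) (fun t => f1 t * f2 t).
  rewrite -RintegralZl //; last by apply: BM_integrable => //; exact: BM_mul.
  rewrite -RintegralD //; last first.
    by apply: BM_integrable => //; apply: BM_mul => //; [exact: BM_cst|exact: BM_mul].
    by apply: BM_integrable.
  apply: eq_Rintegral => t; rewrite inE => Nt.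
  have [h1 h2] := hb t Nt.
  rewrite /f1 /f2.
  have [->|t0] := eqVneq t 0; first by rewrite !mul0r mulr0 addr0.
  have F1 : 1 + a1 * t != 0.
    apply/eqP => F0; move: h1; rewrite F0 normr0 mulr0.
    by rewrite normr_le0 (negPf t0).
  have F2 : 1 + a2 * t != 0.
    apply/eqP => F0; move: h2; rewrite F0 normr0 mulr0.
    by rewrite normr_le0 (negPf t0).
  by field; rewrite F1 F2.
exists (Rintegral mu (~` N) (fun t => f1 t * f2 t)),
  (Rintegral mu (~` N) (fun t => f1 t * f1 t)),
  (Rintegral mu (~` N) (fun t => f2 t * f2 t)); split; last exact: CS.
split.
- rewrite !eI !(intZ _ mN N0) //; rewrite -/f1 -/f2 dif; ring.
- rewrite eU (intZ _ mN N0) //; [by rewrite mulrC|exact: BM_mul].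
- rewrite eU (intZ _ mN N0) //; [by rewrite mulrC|exact: BM_mul].
- by apply: Rintegral_ge0 => t _; rewrite -expr2 sqr_ge0.
- by apply: Rintegral_ge0 => t _; rewrite -expr2 sqr_ge0.
Qed.

End S.

Theorem lemma3p8 (R : realType) (c : R) (nu nut : probability R R)
  (dt1 d1 x1 dt2 d2 x2 : R) :
  0 < c ->
  prob_on_Rplus nu -> prob_on_Rplus nut ->
  ~ is_dirac0 nu -> ~ is_dirac0 nut ->
  triple_ok c nu nut dt1 d1 x1 ->
  triple_ok c nu nut dt2 d2 x2 ->
  (dt1 != dt2 -> x1 != x2) /\ (d1 != d2 -> x1 != x2).
Proof.
move=> c0 Hn Hnt _ _ T1 T2.
suff E : x1 = x2 -> dt1 = dt2 /\ d1 = d2.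
  split => ne; apply/eqP => ex; have [e1 e2] := E ex.
    by rewrite e1 eqxx in ne.
  by rewrite e2 eqxx in ne.
move=> ex; subst x2.
case: T1 => [Dn1 [x0 [ed1 [Dnt1 [edt1 S1]]]]].
case: T2 => [Dn2 [_ [ed2 [Dnt2 [edt2 S2]]]]].
have [P [U1 [U2 [[eP eU1 eU2 U10 U20] CSP]]]] := side c Hn Dn1 Dn2 x0.
have [Q [V1 [V2 [[eQ eV1 eV2 V10 V20] CSQ]]]] := side 1 Hnt Dnt1 Dnt2 x0.
rewrite -ed1 -ed2 in eP.
rewrite !mul1r -edt1 -edt2 in eQ.
rewrite eU1 eV1 in S1; rewrite eU2 eV2 in S2.
set s := x1^-1.
have e2 : forall U V, x1 ^+ 2 * (c * (U / x1 ^+ 2)) * (V / x1 ^+ 2) = c * (s * s) * U * V.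
  by move=> U V; rewrite /s; field.
rewrite e2 in S1; rewrite e2 in S2.
have m0 : 0 <= c * (s * s) by apply: mulr_ge0; [exact: ltW| rewrite -expr2 sqr_ge0].
set m := c * (s * s) in m0 S1 S2.
have eu : dt1 - dt2 = m * P * Q * (dt1 - dt2).
  by rewrite {1}eQ eP /m /s; field.
have hdt : dt1 = dt2.
  apply/eqP; rewrite -subr_eq0; apply/eqP.
  have [//|u0] := eqVneq (dt1 - dt2) 0.
  have mPQ : m * P * Q = 1.
    by apply: (mulIf u0); rewrite mul1r -eu.
  have A10 : 0 <= m * U1 * V1 by rewrite mulr_ge0 // mulr_ge0.
  have A20 : 0 <= m * U2 * V2 by rewrite mulr_ge0 // mulr_ge0.
  have h1 : P ^+ 2 * Q ^+ 2 <= (U1 * U2) * (V1 * V2).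
    by apply: ler_pM => //; rewrite sqr_ge0.
  have h2 : (m * P * Q) ^+ 2 <= (m * U1 * V1) * (m * U2 * V2).
    have -> : (m * P * Q) ^+ 2 = m ^+ 2 * (P ^+ 2 * Q ^+ 2) by ring.
    have -> : (m * U1 * V1) * (m * U2 * V2) = m ^+ 2 * ((U1 * U2) * (V1 * V2)) by ring.
    by apply: ler_wpM2l => //; rewrite sqr_ge0.
  rewrite mPQ expr1n in h2.
  have h3 : (m * U1 * V1) * (m * U2 * V2) < 1.
    have a1 : m * U1 * V1 < 1 by lra.
    have a2 : m * U2 * V2 < 1 by lra.
    nra.
  by move: (le_lt_trans h2 h3); rewrite ltxx.
split => //.
by rewrite ed1 ed2 hdt.
Qed.
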